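(* Fix $p\in(0,1)$, $q=1-p$, and let $T_{n,p}$ be the post-loss completion time of the careless coupon collector started from the empty collection. Then \[\log T_{n,p}=\frac{n(n+1)}{2}\log\frac1q+\log\frac{n^n}{n!}+\mathrm O_{\mathbb P}(1),\] equivalently $\log T_{n,p}=\frac{n(n+1)}{2}\log\frac{1}{1-p}+n-\frac12\log(2\pi n)+\mathrm O_{\mathbb P}(1)$.
   Context: Careless coupon collector (post-loss convention): $S_t\subseteq[n]$, $S_0=\emptyset$; in each round a type $J_t$ is drawn uniformly from $[n]$ independently, and then each coupon of $S_t\cup\{J_t\}$ is independently lost with probability $p$, the survivors forming $S_{t+1}$. $T_{n,p}=\inf\{t\ge0:S_t=[n]\}$. $\mathrm O_{\mathbb P}(1)$ denotes a sequence of random variables that is tight (bounded in probability). *)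

(* Defs.v *)
From HB Require Import structures.
From mathcomp Require Import all_boot all_order all_algebra.
From mathcomp Require Import all_classical all_reals all_analysis.
Set Implicit Arguments. Unset Strict Implicit. Unset Printing Implicit Defensive.
Import Order.TTheory GRing.Theory Num.Theory.
Local Open Scope ring_scope.

(* One round of the careless coupon collector on [n] = 'I_n:
   r.1 = the drawn type J_t (uniform on 'I_n),
   r.2 = the set L_t of coupons whose "loss coin" comes up (each i independently
         with probability p).  Only coins of coupons in S_t :|: {J_t} matter. *)
Definition ccc_round (n : nat) := ('I_n * {set 'I_n})%type.

Definition ccc_step (n : nat) (S : {set 'I_n}) (r : ccc_round n) : {set 'I_n} :=
  (r.1 |: S) :\: r.2.

Definition ccc_round_weight (R : realType) (n : nat) (p : R) (r : ccc_round n) : R :=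
  (n%:R)^-1 * p ^+ #|r.2| * (1 - p) ^+ (n - #|r.2|).

Definition ccc_weight (R : realType) (n b : nat) (p : R)
  (w : {ffun 'I_b -> ccc_round n}) : R :=
  \prod_(i < b) ccc_round_weight p (w i).

Definition ccc_state (n b : nat) (w : {ffun 'I_b -> ccc_round n}) (s : nat)
  : {set 'I_n} :=
  foldl (@ccc_step n) finset.set0 (take s [seq w i | i <- enum 'I_b]).

Definition ccc_T_is (n b : nat) (w : {ffun 'I_b -> ccc_round n}) (s : nat) : bool :=
  (ccc_state w s == [set: 'I_n]) &&
  [forall s' : 'I_b.+1, (s' < s)%N ==> (ccc_state w s' != [set: 'I_n])].

(* P( T_{n,p} <= b  and  A(T_{n,p}) ), computed on the first b rounds *)
Definition ccc_prob_T (R : realType) (n : nat) (p : R) (b : nat) (A : pred nat) : R :=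
  \sum_(w : {ffun 'I_b -> ccc_round n})
     ccc_weight p w * (([exists s : 'I_b.+1, ccc_T_is w s && A s] : bool)%:R).

Definition ccc_center (R : realType) (n : nat) (p : R) : R :=
  ((n * n.+1)./2)%:R * ln ((1 - p)^-1) + ln ((n ^ n)%:R / (n`!)%:R).

(* Main.v *)
Require Import Defs.
From HB Require Import structures.
From mathcomp Require Import all_boot all_order all_algebra.
From mathcomp Require Import all_classical all_reals all_analysis.
From mathcomp Require Import lra zify ring.
Set Implicit Arguments. Unset Strict Implicit. Unset Printing Implicit Defensive.
Import Order.TTheory GRing.Theory Num.Theory.
Local Open Scope ring_scope.
Local Notation set0 := finset.set0.

Section ExDef.
Variables (R : realType) (X : finType) (w : X -> R).

Fixpoint Ex (b : nat) (f : seq X -> R) : R :=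
  if b is b'.+1 then \sum_x w x * Ex b' (fun s => f (x :: s)) else f [::].

Lemma Ex_ext b f g : (forall s, size s = b -> f s = g s) -> Ex b f = Ex b g.
Proof.
elim: b f g => [|b IH] f g H /=; first by apply: H.
apply: eq_bigr => x _; congr (_ * _); apply: IH => s Hs; apply: H => /=; by rewrite Hs.
Qed.

Lemma Ex_add b f g : Ex b (fun s => f s + g s) = Ex b f + Ex b g.
Proof.
elim: b f g => [|b IH] f g //=.
rewrite -big_split /=; apply: eq_bigr => x _; by rewrite IH mulrDr.
Qed.

Lemma Ex_scale b c f : Ex b (fun s => c * f s) = c * Ex b f.
Proof.
elim: b f => [|b IH] f //=.
rewrite mulr_sumr; apply: eq_bigr => x _; by rewrite IH mulrCA.
Qed.

Lemma Ex_sum (I : finType) (P : pred I) b (F : I -> seq X -> R) :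
  Ex b (fun s => \sum_(i | P i) F i s) = \sum_(i | P i) Ex b (F i).
Proof.
elim: b F => [|b IH] F //=.
transitivity (\sum_x \sum_(i | P i) w x * Ex b (fun s => F i (x :: s))).
  by apply: eq_bigr => x _; rewrite (IH (fun i s => F i (x :: s))) mulr_sumr.
by rewrite exchange_big.
Qed.

Lemma Ex_rcons b f : Ex b.+1 f = Ex b (fun s => \sum_x w x * f (rcons s x)).
Proof.
elim: b f => [|b IH] f //.
transitivity (\sum_y w y * Ex b.+1 (fun s => f (y :: s))); first by [].
rewrite [RHS]/=; by apply: eq_bigr => y _; rewrite IH.
Qed.

Lemma Ex_cat a c f g :
  Ex (a + c) (fun s => f (take a s) * g (drop a s)) = Ex a f * Ex c g.
Proof.
elim: a f => [|a IH] f /=.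
  rewrite add0n -Ex_scale; apply: Ex_ext => s _; by rewrite take0 drop0.
rewrite mulr_suml; apply: eq_bigr => x _.
by rewrite -mulrA -IH.
Qed.

Hypothesis w_ge0 : forall x, 0 <= w x.
Hypothesis w_sum1 : \sum_x w x = 1.

Lemma Ex_const b c : Ex b (fun _ => c) = c.
Proof.
elim: b => [|b IH] //=.
by rewrite IH -mulr_suml w_sum1 mul1r.
Qed.

Lemma Ex_le b f g : (forall s, size s = b -> f s <= g s) -> Ex b f <= Ex b g.
Proof.
elim: b f g => [|b IH] f g H /=; first by apply: H.
apply: ler_sum => x _; apply: ler_wpM2l => //; apply: IH => s Hs; apply: H => /=; by rewrite Hs.
Qed.

Lemma Ex_ge0 b f : (forall s, size s = b -> 0 <= f s) -> 0 <= Ex b f.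
Proof. by move=> H; rewrite -(Ex_const b 0); apply: Ex_le. Qed.

Lemma Ex_take a c f : Ex (a + c) (fun s => f (take a s)) = Ex a f.
Proof.
rewrite -[RHS]mulr1 -(Ex_const c 1) -Ex_cat; apply: Ex_ext => s _; by rewrite mulr1.
Qed.

Lemma Ex_drop a c g : Ex (a + c) (fun s => g (drop a s)) = Ex c g.
Proof.
rewrite -[RHS]mul1r -(Ex_const a 1) -Ex_cat; apply: Ex_ext => s _; by rewrite mul1r.
Qed.

Lemma Ex_sub b f g : Ex b (fun s => f s - g s) = Ex b f - Ex b g.
Proof.
rewrite -mulN1r -(Ex_scale b (-1) g) -Ex_add; apply: Ex_ext => s _; by rewrite mulN1r.
Qed.

End ExDef.

Section Ffun.
Variables (R : realType) (X : finType) (w : X -> R).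

Definition fcons b (xv : X * {ffun 'I_b -> X}) : {ffun 'I_b.+1 -> X} :=
  [ffun i => if unlift ord0 i is Some j then xv.2 j else xv.1].
Definition funcons b (v : {ffun 'I_b.+1 -> X}) : X * {ffun 'I_b -> X} :=
  (v ord0, [ffun j => v (lift ord0 j)]).

Lemma fconsK b : cancel (@fcons b) (@funcons b).
Proof.
case=> x v; rewrite /funcons /fcons /= ffunE unlift_none; congr pair.
by apply/ffunP => j; rewrite !ffunE liftK.
Qed.

Lemma funconsK b : cancel (@funcons b) (@fcons b).
Proof.
move=> v; apply/ffunP => i; rewrite /fcons ffunE.
by case: unliftP => [j ->|->] /=; rewrite ?ffunE.
Qed.

Lemma codom_fcons b x v : codom (@fcons b (x, v)) = x :: codom v.
Proof.
rewrite !codomE enum_ordSl /= ffunE unlift_none; congr cons.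
rewrite -map_comp; apply: eq_map => j /=; by rewrite ffunE liftK.
Qed.

Lemma Ex_ffun b F :
  \sum_(v : {ffun 'I_b -> X}) (\prod_(i < b) w (v i)) * F (codom v) = Ex w b F.
Proof.
elim: b F => [|b IH] F /=.
  rewrite (eq_bigr (fun _ => F [::])); last first.
    move=> v _; rewrite big_ord0 mul1r; congr F.
    by apply: size0nil; rewrite size_codom card_ord.
  by rewrite sumr_const card_ffun card_ord expn0 mulr1n.
rewrite (reindex (@fcons b)); last by exists (@funcons b) => v _; [apply: fconsK|apply: funconsK].
rewrite -(pair_big xpredT xpredT (fun x v => (\prod_(i < b.+1) w (fcons (x, v) i)) * F (codom (fcons (x, v))))) /=.
apply: eq_bigr => x _.
rewrite -(IH (fun s => F (x :: s))) mulr_sumr; apply: eq_bigr => v _.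
rewrite big_ord_recl codom_fcons !ffunE unlift_none mulrA; congr (_ * _ * _).
by apply: eq_bigr => j _; rewrite ffunE liftK.
Qed.
End Ffun.

Section Model.
Variables (R : realType) (p : R) (n : nat).
Hypothesis hp0 : 0 < p.
Hypothesis hp1 : p < 1.
Hypothesis hn : (0 < n)%N.

Local Notation q := (1 - p).
Local Notation rw := (@ccc_round_weight R n p).
Local Notation X := (ccc_round n).

Definition cw (L : {set 'I_n}) : R := p ^+ #|L| * q ^+ (n - #|L|).

Lemma cw_prod L : cw L = \prod_i (if i \in L then p else q).
Proof.
rewrite (bigID (mem L)) /=.
rewrite (eq_bigr (fun _ => p)); last by move=> i ->.
rewrite [X in _ * X](eq_bigr (fun _ => q)); last by move=> i /negbTE ->.
rewrite !prodr_const /cw; congr (_ * _ ^+ _).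
have := cardC (mem L); rewrite card_ord => E; rewrite -{1}E addKn.
by apply: eq_card => i; rewrite !inE.
Qed.

Lemma sum_sets (g : 'I_n -> bool -> R) :
  \sum_(L : {set 'I_n}) \prod_i g i (i \in L) = \prod_i (g i true + g i false).
Proof.
rewrite (eq_bigr (fun i => \sum_(b : bool) g i b)); last by move=> i _; rewrite big_bool.
rewrite bigA_distr_bigA /=.
rewrite (reindex (fun L : {set 'I_n} => [ffun i => i \in L])); last first.
  exists (fun f : {ffun 'I_n -> bool} => [set i | f i]) => [L _|f _].
    by apply/setP => i; rewrite inE ffunE.
  by apply/ffunP => i; rewrite ffunE inE.
by apply: eq_bigr => L _; apply: eq_bigr => i _; rewrite ffunE.
Qed.

Lemma disj_prod (A L : {set 'I_n}) :
  ((A :&: L == set0) %:R : R) = \prod_i (if i \in A then ((i \notin L)%:R : R) else 1).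
Proof.
case: (boolP (A :&: L == set0)) => [/eqP H|/set0Pn [i]].
  rewrite big1 // => i _; case: ifP => // iA.
  have : i \notin A :&: L by rewrite H inE.
  by rewrite inE iA /= => ->.
rewrite inE => /andP [iA iL].
by rewrite (bigD1 i) //= iA iL mul0r.
Qed.

Lemma sum_cw_disj (A : {set 'I_n}) :
  \sum_L cw L * ((A :&: L == set0)%:R) = q ^+ #|A|.
Proof.
transitivity (\sum_(L : {set 'I_n}) \prod_i
   ((if i \in L then p else q) * (if i \in A then ((i \notin L)%:R : R) else 1))).
  by apply: eq_bigr => L _; rewrite big_split /= -cw_prod -disj_prod.
rewrite (sum_sets (fun i b => (if b then p else q) * (if i \in A then ((~~ b)%:R : R) else 1))).
rewrite -prodr_const [RHS]big_mkcond /=; apply: eq_bigr => i _.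
by case: (i \in A) => /=; rewrite ?mulr1 ?mulr0 ?add0r ?mul1r // addrC subrK.
Qed.

Lemma sum_cw : \sum_L cw L = 1.
Proof.
have := sum_cw_disj set0; rewrite cards0 expr0 => <-; apply: eq_bigr => L _.
by rewrite finset.set0I eqxx mulr1.
Qed.

Lemma sum_cw_in (j : 'I_n) : \sum_L cw L * ((j \in L)%:R) = p.
Proof.
have := sum_cw_disj [set j]; rewrite cards1 expr1 => H.
have E : forall L : {set 'I_n}, ((j \in L)%:R : R) = 1 - (([set j] :&: L == set0)%:R : R).
  move=> L; case: (boolP (j \in L)) => jL.
    have -> : [set j] :&: L == set0 = false.
      by apply/negbTE/set0Pn; exists j; rewrite !inE eqxx.
    by rewrite subr0.
  have -> : [set j] :&: L == set0.
    apply/eqP/setP => i; rewrite !inE; apply/negbTE; apply/andP => [[/eqP -> ]].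
    by apply/negP.
  by rewrite subrr.
rewrite (eq_bigr (fun L => cw L - cw L * (([set j] :&: L == set0)%:R))); last first.
  by move=> L _; rewrite E mulrBr mulr1.
by rewrite sumrB sum_cw H; lra.
Qed.

Lemma sum_rw (F : 'I_n -> {set 'I_n} -> R) :
  \sum_(x : X) rw x * F x.1 x.2 = n%:R^-1 * \sum_J \sum_L cw L * F J L.
Proof.
rewrite -(pair_bigA _ (fun J L => rw (J, L) * F J L)) mulr_sumr; apply: eq_bigr => J _.
rewrite mulr_sumr; apply: eq_bigr => L _.
by rewrite /ccc_round_weight /cw /= !mulrA.
Qed.

Lemma rw_ge0 x : 0 <= rw x.
Proof.
rewrite /ccc_round_weight; apply: mulr_ge0; first apply: mulr_ge0.
- by rewrite invr_ge0.
- by apply: exprn_ge0; apply: ltW.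
- by apply: exprn_ge0; rewrite subr_ge0 ltW.
Qed.

Lemma rw_sum1 : \sum_(x : X) rw x = 1.
Proof.
have := sum_rw (fun _ _ => 1).
rewrite (eq_bigr rw); last by move=> x _; rewrite mulr1.
move=> ->.
rewrite (eq_bigr (fun _ => 1)); last by move=> J _; rewrite -[RHS]sum_cw; apply: eq_bigr => L _; rewrite mulr1.
rewrite sumr_const card_ord mulVf //.
by rewrite pnatr_eq0 -lt0n.
Qed.

Lemma sum_rw_in : \sum_(x : X) rw x * ((x.1 \in x.2)%:R) = p.
Proof.
rewrite (sum_rw (fun J L => (J \in L)%:R)).
rewrite (eq_bigr (fun _ => p)); last by move=> J _; rewrite sum_cw_in.
rewrite sumr_const card_ord -[p *+ n]mulr_natl mulrA mulVf ?mul1r //.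
by rewrite pnatr_eq0 -lt0n.
Qed.


Let w_ge0 := rw_ge0.
Let w_sum1 := rw_sum1.
Local Notation step := (@ccc_step n).
Local Notation Exr := (Ex rw).

Lemma card_notin (A : {set 'I_n}) : #|[pred J : 'I_n | J \notin A]| = (n - #|A|)%N.
Proof.
have E : (#|A| + #|[pred J : 'I_n | J \notin A]| = n)%N.
  transitivity #|'I_n|; last by rewrite card_ord.
  rewrite -(cardC (mem A)); congr (_ + _); apply: eq_card => i; by rewrite !inE.
lia.
Qed.

Lemma sum_notin (A : {set 'I_n}) (c : R) :
  \sum_J ((J \notin A)%:R * c) = (n - #|A|)%:R * c.
Proof.
transitivity (\sum_(J | J \notin A) c).
  rewrite [RHS]big_mkcond; apply: eq_bigr => J _.
  by case: (J \notin A); rewrite ?mul1r ?mul0r.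
rewrite sumr_const.
have -> : #|[pred J | J \notin A]| = #|[pred J : 'I_n | J \notin A]| by apply: eq_card.
by rewrite card_notin mulr_natl.
Qed.

Fixpoint good (A : {set 'I_n}) (s : seq X) : bool :=
  if s is x :: s' then [&& x.1 \notin A, (x.1 |: A) :&: x.2 == set0 & good (x.1 |: A) s']
  else true.

Lemma good_card A s (S0 : {set 'I_n}) : good A s -> A \subset S0 ->
  (#|A| + size s <= #|foldl step S0 s|)%N.
Proof.
elim: s A S0 => [|x s IH] A S0 /=; first by move=> _ /subset_leq_card; rewrite addn0.
case/and3P => xA /eqP dis g AS.
have := IH _ (step S0 x) g.
rewrite cardsU1 xA add1n addSn addnS; apply.
apply/fintype.subsetP => i iA'; rewrite /ccc_step inE; apply/andP; split.
  apply/negP => iL; have : i \in (x.1 |: A) :&: x.2 by rewrite inE iA' iL.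
  by rewrite dis inE.
move: iA'; rewrite !inE => /orP [->//|iA]; by rewrite (fintype.subsetP AS) ?orbT.
Qed.

Lemma good_full s (S0 : {set 'I_n}) : good set0 s -> size s = n -> foldl step S0 s = [set: 'I_n].
Proof.
move=> g sz; have := good_card (S0:=S0) g (finset.sub0set _); rewrite cards0 add0n sz => H.
by apply/eqP; rewrite eqEcard finset.subsetT cardsT card_ord.
Qed.

Lemma good_nolose A s : good A s -> all (fun x : X => x.1 \notin x.2) s.
Proof.
elim: s A => //= x s IH A /and3P [_ /eqP dis g]; rewrite (IH _ g) andbT.
apply/negP => xL; have : x.1 \in (x.1 |: A) :&: x.2 by rewrite !inE eqxx xL.
by rewrite dis inE.
Qed.

Fixpoint delta (a m : nat) : R :=
  if m is m'.+1 then (n - a)%:R / n%:R * q ^+ a.+1 * delta a.+1 m' else 1.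

Lemma Ex_good m A : Exr m (fun s => (good A s)%:R) = delta #|A| m.
Proof.
elim: m A => [|m IH] A //=.
rewrite (eq_bigr (fun x : X => rw x *
   ((((x.1 \notin A) && ((x.1 |: A) :&: x.2 == set0))%:R) * delta #|A|.+1 m))); last first.
  move=> x _; congr (_ * _).
  case: (boolP ((x.1 \notin A) && ((x.1 |: A) :&: x.2 == set0))) => /= c.
    rewrite mul1r; case/andP: c => xA dis.
    have -> : #|A|.+1 = #|x.1 |: A| by rewrite cardsU1 xA.
    rewrite -IH; apply: Ex_ext => s _ /=.
    by rewrite xA dis.
  rewrite mul0r -(Ex_const w_sum1 m 0); apply: Ex_ext => s _ /=.
  by move: c; case: (x.1 \notin A); case: ((x.1 |: A) :&: x.2 == set0).
rewrite (sum_rw (fun J L => ((J \notin A) && ((J |: A) :&: L == set0))%:R * delta #|A|.+1 m)).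
rewrite (eq_bigr (fun J => (J \notin A)%:R * (q ^+ #|A|.+1 * delta #|A|.+1 m))); last first.
  move=> J _; case: (boolP (J \notin A)) => JA /=.
    have -> : #|A|.+1 = #|J |: A| by rewrite cardsU1 JA.
    rewrite mul1r -sum_cw_disj mulr_suml.
    by apply: eq_bigr => L _; rewrite mulrA.
  rewrite big1 => [|L _]; by rewrite ?mulr0n ?mul0r ?mulr0.
rewrite sum_notin; rewrite !mulrA; congr (_ * _ * _).
by rewrite mulrC.
Qed.

Lemma prod_rev k : (\prod_(i < k) (k - i))%N = k`!.
Proof.
elim: k => [|k IH]; first by rewrite big_ord0.
rewrite big_ord_recl subn0 factS; congr (_ * _)%N.
rewrite -IH.
by apply: eq_bigr => i _; rewrite lift0 subSS.
Qed.

Lemma delta_closed a m : delta a m =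
  (\prod_(i < m) ((n - a - i)%:R : R)) / n%:R ^+ m * q ^+ (m * a + 'C(m.+1, 2)).
Proof.
elim: m a => [|m IH] a /=.
  by rewrite big_ord0 expr0 mul0n bin_small // invr1 !mulr1.
rewrite IH big_ord_recl subn0.
rewrite [in RHS](eq_bigr (fun i : 'I_m => ((n - a.+1 - i)%:R : R))); last first.
  move=> i _ /=; congr (_%:R); rewrite /bump /=; lia.
have -> : (m.+1 * a + 'C(m.+2, 2) = a.+1 + (m * a.+1 + 'C(m.+1, 2)))%N.
  rewrite binS bin1; lia.
rewrite !exprD [n%:R ^+ m.+1]exprS.
have nz : (n%:R : R) != 0 by rewrite pnatr_eq0 -lt0n.
field.
by rewrite nz andbT expf_neq0.
Qed.

Fixpoint gamma (m : nat) : R :=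
  if m is m'.+1 then gamma m' * (m%:R / n%:R * q ^+ m) else 1.

Lemma gamma_closed m : gamma m = m`!%:R / n%:R ^+ m * q ^+ 'C(m.+1, 2).
Proof.
elim: m => [|m IH] /=.
  by rewrite expr0 bin_small // invr1 !mulr1.
have -> : 'C(m.+2, 2) = ('C(m.+1, 2) + m.+1)%N by rewrite binS bin1.
rewrite IH factS natrM !exprD [n%:R ^+ m.+1]exprS.
have nz : (n%:R : R) != 0 by rewrite pnatr_eq0 -lt0n.
field.
by rewrite nz andbT expf_neq0.
Qed.

Lemma delta0 : delta 0 n = gamma n.
Proof.
rewrite delta_closed gamma_closed muln0 add0n; congr (_ / _ * _).
rewrite -natr_prod -(prod_rev n); congr (_%:R); apply: eq_bigr => i _.
by rewrite subn0.
Qed.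

Lemma q_gt0 : 0 < q. Proof. by rewrite subr_gt0. Qed.
Lemma q_ge0 : 0 <= q. Proof. exact: ltW q_gt0. Qed.
Lemma q_le1 : q <= 1. Proof. by rewrite lerBlDr lerDl ltW. Qed.

Lemma gamma_ge0 m : 0 <= gamma m.
Proof.
elim: m => [|m IH] /=; first exact: ler01.
apply: mulr_ge0 => //; apply: mulr_ge0; last exact: exprn_ge0 q_ge0.
by apply: divr_ge0.
Qed.

Definition beta (m : nat) : R := gamma m * expR (q * (1 - q ^+ m) / p ^+ 2).

Lemma beta_ge0 m : 0 <= beta m.
Proof. by apply: mulr_ge0; [apply: gamma_ge0|apply: expR_ge0]. Qed.

Lemma beta0 : beta 0 = 1.
Proof. by rewrite /beta /= expr0 subrr mulr0 mul0r expR0 mulr1. Qed.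

Lemma beta_le m : beta m <= gamma m * expR (q / p ^+ 2).
Proof.
apply: ler_wpM2l; first exact: gamma_ge0.
rewrite ler_expR ler_pM2r ?invr_gt0 ?exprn_gt0 //.
rewrite -[leRHS]mulr1; apply: ler_wpM2l; first exact: q_ge0.
by rewrite lerBlDr lerDl exprn_ge0 // q_ge0.
Qed.

Lemma beta_rec m :
  q ^+ m.+1 * (beta m.+1 + m.+1%:R / n%:R * beta m) <= beta m.+1.
Proof.
set y := q ^+ m.+1.
set E := expR (q * (1 - q ^+ m) / p ^+ 2).
set Z := expR (y / p).
have hE : expR (q * (1 - q ^+ m.+1) / p ^+ 2) = E * Z.
  rewrite -expRD; congr expR; rewrite /y exprS.
  have pn0 : p != 0 by rewrite gt_eqF.
  field; by rewrite pn0.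
set c := m.+1%:R / n%:R.
have c0 : 0 <= c by apply: divr_ge0.
have G0 : 0 <= gamma m * c by apply: mulr_ge0 => //; apply: gamma_ge0.
have y0 : 0 <= y by apply: exprn_ge0 q_ge0.
have yq : y <= q.
  by rewrite /y exprS -[leRHS]mulr1 ler_wpM2l ?q_ge0 // exprn_ile1 ?q_ge0 ?q_le1.
have E0 : 0 < E by apply: expR_gt0.
have Z1 : 1 + y / p <= Z by apply: expR_ge1Dx.
have key : 1 <= (1 - y) * Z.
  have h1 : 0 <= (y / p) * (q - y) by apply: mulr_ge0; [apply: divr_ge0 => //; apply: ltW|rewrite subr_ge0].
  have h2 : (1 - y) * (1 + y / p) - 1 = (y / p) * (q - y).
    have pn0 : p != 0 by rewrite gt_eqF.
    field; by rewrite pn0.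
  have h3 : (1 - y) * (1 + y / p) <= (1 - y) * Z.
    by apply: ler_wpM2l => //; rewrite subr_ge0 (le_trans yq) ?q_le1.
  lra.
rewrite /beta /= hE.
rewrite -/y -/c.
have -> : gamma m * (c * y) * (E * Z) = (gamma m * c) * y * (E * Z) by rewrite !mulrA.
have -> : c * (gamma m * E) = (gamma m * c) * E by rewrite mulrCA mulrA.
set G := gamma m * c.
have : y * (G * y * (E * Z) + G * E) - G * y * (E * Z) = (G * y * E) * (1 - (1 - y) * Z).
  ring.
have : 0 <= G * y * E by apply: mulr_ge0; [apply: mulr_ge0|apply: ltW].
move=> h4 h5.
have : (G * y * E) * (1 - (1 - y) * Z) <= 0.
  by apply: mulr_ge0_le0 => //; lra.
lra.
Qed.

Lemma cover_bound (A S : {set 'I_n}) (J : 'I_n) :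
  ((A \subset J |: S)%:R : R) <=
  (A \subset S)%:R + \sum_(i in A) (((J == i) && (A :\ i \subset S))%:R : R).
Proof.
have sum0 : 0 <= \sum_(i in A) (((J == i) && (A :\ i \subset S))%:R : R).
  by apply: sumr_ge0 => i _; apply: ler0n.
case AS: (A \subset S).
  rewrite -[X in X <= _]addr0; apply: lerD => //.
  by case: (A \subset J |: S).
case AJS: (A \subset J |: S); last by rewrite add0r.
have JA : J \in A.
  apply/negPn/negP => JA; move/negbT: AS => /negP; apply.
  apply/fintype.subsetP => i iA; have := fintype.subsetP AJS i iA; rewrite !inE => /orP [iJ|//].
  by move: JA; rewrite -(eqP iJ) iA.
rewrite add0r (bigD1 J) //= eqxx /=.
have -> : A :\ J \subset S.
  apply/fintype.subsetP => i; rewrite !inE => /andP [iJ iA].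
  have := fintype.subsetP AJS i iA; rewrite !inE => /orP [iJ'|//].
  by move: iJ; rewrite iJ'.
rewrite -[X in X <= _]addr0; apply: lerD => //.
by apply: sumr_ge0 => i _; apply: ler0n.
Qed.

Lemma step_bound (A S : {set 'I_n}) :
  \sum_x rw x * ((A \subset step S x)%:R) <=
  q ^+ #|A| * ((A \subset S)%:R + n%:R^-1 * \sum_(i in A) ((A :\ i \subset S)%:R)).
Proof.
have E : forall x : X, ((A \subset step S x)%:R : R) =
    ((A :&: x.2 == set0)%:R) * ((A \subset x.1 |: S)%:R).
  move=> x; rewrite /ccc_step subsetD setI_eq0.
  by case: (A \subset x.1 |: S); case: [disjoint A & x.2]; rewrite ?mulr1 ?mulr0.
rewrite (eq_bigr (fun x => rw x * (((A :&: x.2 == set0)%:R) * ((A \subset x.1 |: S)%:R))));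
  last by move=> x _; rewrite E.
rewrite (sum_rw (fun J L => ((A :&: L == set0)%:R) * ((A \subset J |: S)%:R))).
rewrite (eq_bigr (fun J => q ^+ #|A| * ((A \subset J |: S)%:R))); last first.
  move=> J _; rewrite -sum_cw_disj mulr_suml; apply: eq_bigr => L _; by rewrite mulrA.
rewrite -mulr_sumr mulrCA; apply: ler_wpM2l; first exact: exprn_ge0 q_ge0.
apply: (@le_trans _ _ (n%:R^-1 * \sum_J ((A \subset S)%:R +
          \sum_(i in A) (((J == i) && (A :\ i \subset S))%:R : R)))).
  apply: ler_wpM2l; first by rewrite invr_ge0.
  by apply: ler_sum => J _; apply: cover_bound.
rewrite big_split /= sumr_const card_ord exchange_big /=.
rewrite (eq_bigr (fun i => ((A :\ i \subset S)%:R : R))); last first.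
  move=> i _; rewrite (bigD1 i) //= eqxx /= big1 ?addr0 // => J /negbTE ->.
  by [].
rewrite mulrDr -[(_ \subset S)%:R *+ n]mulr_natl mulrA mulVf ?mul1r //.
by rewrite pnatr_eq0 -lt0n.
Qed.

Lemma sub_bound k (A : {set 'I_n}) :
  Exr k (fun s => (A \subset foldl step set0 s)%:R) <= beta #|A|.
Proof.
elim: k A => [|k IH] A.
  rewrite /= finset.subset0; case: (boolP (A == set0)) => [/eqP ->|_].
    by rewrite cards0 beta0.
  exact: beta_ge0.
rewrite Ex_rcons.
apply: (@le_trans _ _ (Exr k (fun s => q ^+ #|A| * ((A \subset foldl step set0 s)%:R
   + n%:R^-1 * \sum_(i in A) ((A :\ i \subset foldl step set0 s)%:R))))).
  apply: (Ex_le w_ge0) => s _.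
  rewrite (eq_bigr (fun x => rw x * ((A \subset step (foldl step set0 s) x)%:R))); last first.
    by move=> x _; rewrite foldl_rcons.
  exact: step_bound.
rewrite Ex_scale Ex_add Ex_scale (Ex_sum rw (mem A)).
case: (posnP #|A|) => [A0|Apos].
  have A0' : A = set0 by apply/eqP; rewrite -cards_eq0 A0.
  rewrite big_pred0; last by move=> i /=; rewrite A0' inE.
  rewrite mulr0 addr0 A0' cards0 expr0 mul1r.
  by have := IH set0; rewrite cards0.
have [m Am] : exists m, #|A| = m.+1 by exists #|A|.-1; rewrite prednK.
rewrite Am; apply: (le_trans _ (beta_rec m)).
apply: ler_wpM2l; first exact: exprn_ge0 q_ge0.
apply: lerD; first by rewrite -Am; apply: IH.
rewrite [_ / _]mulrC -mulrA; apply: ler_wpM2l; first by rewrite invr_ge0.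
rewrite -Am mulr_natl -sumr_const.
apply: ler_sum => i iA.
have -> : m = #|A :\ i| by have := cardsD1 i A; rewrite (iA : i \in A) Am add1n => -[].
exact: IH.
Qed.

Lemma gamma_gt0 m : 0 < gamma m.
Proof.
elim: m => [|m IH] /=; first exact: ltr01.
apply: mulr_gt0 => //; apply: mulr_gt0; last exact: exprn_gt0 q_gt0.
by apply: divr_gt0; rewrite ?ltr0n.
Qed.

Lemma gamma_le_inv m : (m.+1 <= n)%N -> gamma m.+1 <= n%:R^-1.
Proof.
elim: m => [|m IH] Hm.
  rewrite /= mul1r expr1 mul1r -[leRHS]mulr1; apply: ler_wpM2l.
    by rewrite invr_ge0.
  exact: q_le1.
have -> : gamma m.+2 = gamma m.+1 * (m.+2%:R / n%:R * q ^+ m.+2) by [].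
rewrite -[leRHS]mulr1; apply: ler_pM.
- exact: gamma_ge0.
- apply: mulr_ge0; [apply: divr_ge0 => //|exact: exprn_ge0 q_ge0].
- by apply: IH; apply: ltnW.
- rewrite -[leRHS]mulr1; apply: ler_pM.
  + by apply: divr_ge0.
  + exact: exprn_ge0 q_ge0.
  + rewrite ler_pdivrMr ?ltr0n // mul1r ler_nat //.
  + by apply: exprn_ile1; [exact: q_ge0|exact: q_le1].
Qed.

Lemma center_gamma : expR (ccc_center n p) * gamma n = 1.
Proof.
rewrite /ccc_center expRD expRM_natl gamma_closed.
have q0 : 0 < q := q_gt0.
rewrite lnK; last by rewrite posrE invr_gt0.
rewrite lnK; last first.
  rewrite posrE divr_gt0 // ltr0n ?expn_gt0 ?hn ?fact_gt0 //.
have -> : ((n * n.+1)./2 = 'C(n.+1, 2))%N by rewrite bin2 mulnC.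
rewrite natrX exprVn.
have nz : (n%:R : R) != 0 by rewrite pnatr_eq0 -lt0n.
have fz : (n`!%:R : R) != 0 by rewrite pnatr_eq0 -lt0n fact_gt0.
have qz : q ^+ 'C(n.+1, 2) != 0 by rewrite expf_neq0 // gt_eqF.
field.
by rewrite qz fz expf_neq0.
Qed.

Definition H (s : seq X) : bool := [exists j : 'I_n, good set0 (take n (drop j s))].

Definition Gtail (t : seq X) : bool :=
  if t is x :: r then (x.1 \in x.2) && good set0 (take n r) else false.

Definition G (j : nat) (s : seq X) : bool :=
  if j is k.+1 then Gtail (drop k s) else good set0 (take n s).

Lemma G_good j s : G j s -> good set0 (take n (drop j s)).
Proof.
case: j => [|k] /=; first by rewrite drop0.
rewrite /Gtail; case E: (drop k s) => [//|x r] /andP [_ g].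
by rewrite -add1n -drop_drop E /= drop0.
Qed.

Lemma G_H j s : (j < n)%N -> G j s -> H s.
Proof.
move=> jn /G_good g; apply/existsP; exists (Ordinal jn); exact: g.
Qed.

Lemma G_excl j j' s : (j' < j)%N -> (j < n)%N -> G j s -> G j' s -> False.
Proof.
case: j => [//|k] jj kn /=.
rewrite /Gtail; case E: (drop k s) => [//|x r] /andP [xL _] /G_good g.
suff xin : x \in take n (drop j' s).
  by move/allP: (good_nolose g) => /(_ x xin); rewrite xL.
have d1 : drop k s = drop (k - j') (drop j' s) by rewrite drop_drop subnK // -ltnS.
have e : take n (drop j' s) = take ((k - j') + (n - (k - j'))) (drop j' s).
  by rewrite subnKC //; lia.
rewrite e takeD mem_cat; apply/orP; right.
rewrite -d1 E.
have -> : (n - (k - j') = (n - (k - j')).-1.+1)%N by rewrite prednK //; lia.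
by rewrite /= mem_head.
Qed.

Lemma sumG_le_H s : \sum_(j < n) ((G j s)%:R : R) <= (H s)%:R.
Proof.
case: (boolP [exists j : 'I_n, G j s]) => [/existsP [j0 Gj0] | /existsPn none].
  rewrite (G_H (ltn_ord j0) Gj0) (bigD1 j0) //= Gj0 big1 ?addr0 // => j jj0.
  case Gj: (G j s) => //.
  exfalso; case: (ltngtP j j0) => [lt|gt|/val_inj eq].
  - exact: (G_excl lt (ltn_ord j0) Gj0 Gj).
  - exact: (G_excl gt (ltn_ord j) Gj Gj0).
  - by move: jj0; rewrite eq eqxx.
rewrite big1 ?ler0n // => j _.
by move: (none j) => /negbTE ->.
Qed.

Lemma delta0_ge0 : 0 <= delta 0 n.
Proof. rewrite delta0; exact: gamma_ge0. Qed.

Lemma Ex_take_good c : (n <= c)%N -> Exr c (fun s => (good set0 (take n s))%:R) = delta 0 n.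
Proof.
move=> nc; have -> : c = (n + (c - n))%N by rewrite subnKC.
by rewrite (Ex_take w_sum1 n (c - n) (fun t => (good set0 t)%:R)) Ex_good cards0.
Qed.

Lemma EG j : (j < n)%N -> p * delta 0 n <= Exr (n + n) (fun s => (G j s)%:R).
Proof.
case: j => [|k] kn.
  rewrite /G Ex_take_good ?leq_addr //.
  rewrite -[leRHS]mul1r; apply: ler_wpM2r; [exact: delta0_ge0|exact: ltW].
have -> : (n + n = k + (n + n - k.+1).+1)%N by lia.
rewrite /G (Ex_drop w_sum1 k _ (fun t => (Gtail t)%:R)) /=.
rewrite (eq_bigr (fun x : X => rw x * ((x.1 \in x.2)%:R * delta 0 n))); last first.
  move=> x _; congr (_ * _).
  case: (x.1 \in x.2) => /=.
    by rewrite mul1r Ex_take_good //; lia.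
  by rewrite mul0r (Ex_const w_sum1).
rewrite (eq_bigr (fun x : X => rw x * (x.1 \in x.2)%:R * delta 0 n)); last by move=> x _; rewrite mulrA.
by rewrite -mulr_suml sum_rw_in.
Qed.

Definition h := Exr (n + n) (fun s => (H s)%:R).

Lemma h_ge : n%:R * p * delta 0 n <= h.
Proof.
apply: (@le_trans _ _ (Exr (n + n) (fun s => \sum_(j < n) ((G j s)%:R : R)))); last first.
  by apply: (Ex_le w_ge0) => s _; apply: sumG_le_H.
rewrite (Ex_sum rw xpredT) /=.
rewrite -mulrA mulr_natl -[n in _ *+ n]card_ord -sumr_const.
by apply: ler_sum => j _; apply: EG.
Qed.

Lemma one_sub_h : 1 - h = Exr (n + n) (fun s => (~~ H s)%:R).
Proof.
transitivity (Exr (n + n) (fun s => 1 - (H s)%:R)); last first.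
  apply: Ex_ext => s _; case: (H s); by rewrite /= ?subrr ?subr0.
by rewrite Ex_sub (Ex_const w_sum1).
Qed.

Lemma h_le1 : h <= 1.
Proof.
have : 0 <= 1 - h by rewrite one_sub_h; apply: (Ex_ge0 w_ge0 w_sum1) => s _; apply: ler0n.
lra.
Qed.

Fixpoint nohit (K : nat) (s : seq X) : bool :=
  if K is K'.+1 then ~~ H (take (n + n) s) && nohit K' (drop (n + n) s) else true.

Lemma Ex_nohit K r : Exr ((n + n) * K + r) (fun s => (nohit K s)%:R) = (1 - h) ^+ K.
Proof.
elim: K => [|K IH]; first by rewrite muln0 add0n expr0 (Ex_const w_sum1).
have -> : ((n + n) * K.+1 + r = (n + n) + ((n + n) * K + r))%N by rewrite mulnS addnA.
rewrite exprS -IH one_sub_h -Ex_cat; apply: Ex_ext => s _ /=.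
by case: (H _); case: (nohit _ _); rewrite /= ?mulr1 ?mulr0 ?mul0r.
Qed.

Lemma nohit_full K s (S0 : {set 'I_n}) : ((n + n) * K <= size s)%N -> ~~ nohit K s ->
  exists k, (k <= (n + n) * K)%N /\ foldl step S0 (take k s) = [set: 'I_n].
Proof.
elim: K s S0 => [|K IH] s S0 //= sz.
rewrite negb_and negbK => /orP [/existsP [j g]|nh].
  have jn := ltn_ord j.
  have e : take n (drop j (take (n + n) s)) = take n (drop j s).
    have -> : (n + n = (n + n - j) + j)%N by rewrite subnK //; lia.
    by rewrite -take_drop take_takel //; lia.
  rewrite e in g.
  exists (j + n)%N; split; first by rewrite mulnS; lia.
  rewrite takeD foldl_cat; apply: good_full => //.
  by rewrite size_takel // size_drop; move: sz; rewrite mulnS; lia.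
have [k [kle kf]] := IH (drop (n + n) s) (foldl step S0 (take (n + n) s))
   ltac:(rewrite size_drop; move: sz; rewrite mulnS; lia) nh.
exists (n + n + k)%N; split; first by rewrite mulnS; lia.
by rewrite takeD foldl_cat.
Qed.

Lemma bernoulli (x : R) K : 0 <= x -> x <= 1 -> (1 - x) ^+ K * (1 + K%:R * x) <= 1.
Proof.
move=> x0 x1; elim: K => [|K IH]; first by rewrite expr0 mul0r addr0 mulr1.
have P0 : 0 <= (1 - x) ^+ K by apply: exprn_ge0; lra.
set P := (1 - x) ^+ K in IH P0 *.
rewrite exprS -/P -natr1.
have e : (1 - x) * P * (1 + (K%:R + 1) * x) = P * (1 + K%:R * x) - P * (K%:R + 1) * x * x by ring.
have : 0 <= P * (K%:R + 1) * x * x.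
  by apply: mulr_ge0 => //; apply: mulr_ge0 => //; apply: mulr_ge0 => //; apply: addr_ge0.
lra.
Qed.

Lemma count_le (Y : R) N : 0 <= Y ->
  \sum_(k < N) ((((1 <= k)%N && (k%:R < Y))%:R) : R) <= Y.
Proof.
move=> Y0.
suff : \sum_(k < N) ((((1 <= k)%N && (k%:R < Y))%:R) : R) <= Y /\
       \sum_(k < N) ((((1 <= k)%N && (k%:R < Y))%:R) : R) <= (N.-1)%:R by case.
elim: N => [|N [IH1 IH2]]; first by rewrite big_ord0.
rewrite big_ord_recr /=.
case: (boolP ((1 <= N)%N && (N%:R < Y))) => /= [/andP [N1 NY]|_]; last first.
  rewrite addr0; split => //; apply: (le_trans IH2); rewrite ler_nat; lia.
have e : (N.-1)%:R + 1 = (N%:R : R) by rewrite natr1 prednK.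
split.
  apply: (le_trans (lerD IH2 (lexx _))); rewrite e; exact: ltW.
by apply: (le_trans (lerD IH2 (lexx _))); rewrite e.
Qed.

End Model.

Section Main.
Variables (R : realType) (p : R) (n : nat).
Hypothesis hp0 : 0 < p.
Hypothesis hp1 : p < 1.
Hypothesis hn : (0 < n)%N.
Local Notation rw := (@ccc_round_weight R n p).
Local Notation X := (ccc_round n).
Local Notation step := (@ccc_step n).
Local Notation Exr := (Ex rw).
Local Notation st s := (foldl step set0 s).

Variables (b : nat) (A : pred nat).

Definition Tis (s : seq X) (t : nat) : bool :=
  (st (take t s) == [set: 'I_n]) &&
  [forall s' : 'I_b.+1, (s' < t)%N ==> (st (take s' s) != [set: 'I_n])].

Definition Fev (s : seq X) : R := ([exists t : 'I_b.+1, Tis s t && A t])%:R.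

Lemma prob_Ex : ccc_prob_T n p b A = Exr b Fev.
Proof.
rewrite /ccc_prob_T -Ex_ffun; apply: eq_bigr => w _.
by rewrite /Fev /Tis /ccc_weight /ccc_T_is /ccc_state codomE.
Qed.

Definition fb (s : seq X) : bool := [exists k : 'I_b.+1, st (take k s) == [set: 'I_n]].

Lemma st0 : set0 != [set: 'I_n].
Proof.
apply/eqP => E.
have : (Ordinal hn) \in [set: 'I_n] by rewrite inE.
by rewrite -E inE.
Qed.

Lemma event_bound (Y : R) s : size s = b ->
  (forall t : nat, (1 <= t)%N -> (t <= b)%N -> ~~ A t -> t%:R < Y) ->
  1 - (~~ fb s)%:R - \sum_(k < b.+1) ((((1 <= k)%N && (k%:R < Y))%:R) * ((st (take k s) == [set: 'I_n])%:R))
  <= Fev s.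
Proof.
move=> sz HA.
have S0 : 0 <= \sum_(k < b.+1) ((((1 <= k)%N && (k%:R < Y))%:R) * ((st (take k s) == [set: 'I_n])%:R) : R).
  by apply: sumr_ge0 => k _; apply: mulr_ge0; apply: ler0n.
rewrite /Fev; case: (boolP [exists t : 'I_b.+1, Tis s t && A t]) => [_|nE].
  have : 0 <= ((~~ fb s)%:R : R) by apply: ler0n.
  rewrite /=; lra.
case: (boolP (fb s)) => [/existsP [k0 k0f]|_]; last first.
  rewrite /=; lra.
have ex : exists k, (k <= b)%N && (st (take k s) == [set: 'I_n]).
  by exists k0; rewrite k0f andbT -ltnS ltn_ord.
case: (ex_minnP ex) => t /andP [tb tf] tmin.
have tpos : (1 <= t)%N.
  case: t tb tf tmin => // _ tf _.
  by move: tf; rewrite take0 /= => /eqP E; move: st0; rewrite E eqxx.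
have tI : (t < b.+1)%N by [].
have nA : ~~ A t.
  apply/negP => At; move/existsP: nE; apply; exists (Ordinal tI).
  rewrite /Tis /= tf At andbT /=; apply/forallP => s'; apply/implyP => lt.
  apply/negP => sf; have := tmin s'; rewrite sf andbT.
  have -> : (s' <= b)%N by rewrite -ltnS ltn_ord.
  by move=> /(_ isT); rewrite leqNgt lt.
have tY := HA t tpos tb nA.
rewrite (bigD1 (Ordinal tI)) //= tpos tY tf /= mulr1.
have : 0 <= \sum_(k < b.+1 | k != Ordinal tI)
   ((((1 <= k)%N && (k%:R < Y))%:R) * ((st (take k s) == [set: 'I_n])%:R) : R).
  by apply: sumr_ge0 => k _; apply: mulr_ge0; apply: ler0n.
lra.
Qed.

End Main.

Lemma take_full_bound (R : realType) (p : R) (n : nat) (hp0 : 0 < p) (hp1 : p < 1)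
  (hn : (0 < n)%N) bb k : (k <= bb)%N ->
  Ex (@ccc_round_weight R n p) bb
     (fun s => ((foldl (@ccc_step n) set0 (take k s) == [set: 'I_n])%:R))
  <= gamma p n n * expR ((1 - p) / p ^+ 2).
Proof.
move=> kb.
have e : bb = (k + (bb - k))%N by rewrite subnKC.
rewrite e (Ex_take (rw_sum1 p hn) k (bb - k)
   (fun t => ((foldl (@ccc_step n) set0 t == [set: 'I_n])%:R))).
apply: le_trans (beta_le n hp0 hp1 n).
have := sub_bound hp0 hp1 hn k [set: 'I_n]; rewrite cardsT card_ord.
apply: le_trans; apply: (Ex_le (rw_ge0 hp0 hp1)) => s _.
by case: eqP => [->|_]; rewrite ?finset.subsetT ?ler0n.
Qed.

Unset Implicit Arguments. Set Strict Implicit. Set Printing Implicit Defensive.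

Theorem mainTheorem19 (R : realType) (p : R) (hp0 : 0 < p) (hp1 : p < 1) :
  forall eps : R, 0 < eps ->
  exists M : R, forall n : nat, (1 <= n)%N ->
    1 - eps <=
    ccc_prob_T n p (Num.truncn (expR (ccc_center n p + M)))
      (fun t : nat => `|ln (t%:R : R) - ccc_center n p| <= M).
Proof.
move=> eps heps.
have q0 : 0 < 1 - p by rewrite subr_gt0.
set Kc := expR ((1 - p) / p ^+ 2).
have Kc0 : 0 < Kc := expR_gt0 _.
set Z := 4 / (p * eps) + 3 + 2 * Kc / eps.
have Z3 : 3 + 4 / (p * eps) <= Z.
  have : 0 <= 2 * Kc / eps by apply: divr_ge0; [apply: mulr_ge0 => //; apply: ltW|apply: ltW].
  rewrite /Z; lra.
have pe0 : 0 < 4 / (p * eps) by apply: divr_gt0 => //; apply: mulr_gt0.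
have Z0 : 0 < Z by lra.
exists (ln Z) => n hn.
have eZ : expR (ln Z) = Z by rewrite lnK // posrE.
set c := ccc_center n p.
set M := ln Z.
set rho := gamma p n n.
have crho : expR c * rho = 1 := center_gamma hp1 hn.
have rho0 : 0 < rho := gamma_gt0 hp1 hn n.
have nrho : n%:R * rho <= 1.
  have := gamma_le_inv hp0 hp1 hn (m := n.-1); rewrite prednK // => /(_ (leqnn n)) le.
  have nz : (n%:R : R) != 0 by rewrite pnatr_eq0 -lt0n.
  apply: (@le_trans _ _ (n%:R * n%:R^-1)); first by apply: ler_wpM2l.
  by rewrite mulfV.
set Y := expR (c - M).
set bb := Num.truncn (expR (c + M)).
rewrite prob_Ex.
have HA : forall t : nat, (1 <= t)%N -> (t <= bb)%N ->
    ~~ (`|ln (t%:R : R) - c| <= M) -> t%:R < Y.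
  move=> t t1 tb.
  have t0 : (0 : R) < t%:R by rewrite ltr0n.
  have tle : (t%:R : R) <= expR (c + M) by rewrite -truncn_ge_nat // expR_ge0.
  have lnle : ln (t%:R : R) <= c + M.
    by rewrite -[leRHS]expRK ler_ln // posrE expR_gt0.
  rewrite -ltNge ltr_normr => /orP [H1|H2]; first by exfalso; lra.
  rewrite -(lnK (x := t%:R)) ?posrE // /Y ltr_expR; lra.
set A := (fun t : nat => `|ln (t%:R : R) - c| <= M).
set L := fun s : seq (ccc_round n) => 1 - ((~~ fb bb s)%:R : R) -
    \sum_(k < bb.+1) ((((1 <= k)%N && (k%:R < Y))%:R) *
        ((foldl (@ccc_step n) set0 (take k s) == [set: 'I_n])%:R)).
have EL : Ex (@ccc_round_weight R n p) bb L <= Ex (@ccc_round_weight R n p) bb (Fev R bb A).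
  apply: (Ex_le (rw_ge0 hp0 hp1)) => s sz.
  exact: (event_bound hn sz HA).
apply: le_trans EL.
rewrite /L !Ex_sub (Ex_const (rw_sum1 p hn)) (Ex_sum _ xpredT).
under eq_bigr => k _ do rewrite Ex_scale.
set K := (bb %/ (n + n))%N.
set r := (bb %% (n + n))%N.
have Ebb : bb = ((n + n) * K + r)%N by rewrite mulnC -divn_eq.
have rL : (r < n + n)%N by rewrite ltn_mod; lia.
clearbody K r.
set hh := h p n.
have hge : n%:R * p * rho <= hh by rewrite /rho -(delta0 p hn); exact: (h_ge hp0 hp1 hn).
have hle : hh <= 1 := h_le1 hp0 hp1 hn.
have h0 : 0 <= hh by apply: le_trans hge; apply: mulr_ge0; [apply: mulr_ge0|apply: ltW] => //; apply: ltW.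
have B1 : Ex (@ccc_round_weight R n p) bb (fun s => ((~~ fb bb s)%:R : R)) <= (1 - hh) ^+ K.
  have EN : Ex (@ccc_round_weight R n p) bb (fun s => ((nohit K s)%:R : R)) = (1 - hh) ^+ K.
    by rewrite {1}Ebb Ex_nohit.
  rewrite -EN; apply: (Ex_le (rw_ge0 hp0 hp1)) => s sz.
  case nh: (nohit K s); first by rewrite ler_nat leq_b1.
  have [k [kle kf]] := nohit_full p hn set0 (s := s) (K := K)
     ltac:(rewrite sz [X in (_ <= X)%N]Ebb leq_addr //) (negbT nh).
  have kI : (k < bb.+1)%N by rewrite ltnS (leq_trans kle) // [X in (_ <= X)%N]Ebb leq_addr.
  suff -> : fb bb s by [].
  by apply/existsP; exists (Ordinal kI); rewrite /= kf.
have B2 : \sum_(k < bb.+1) ((((1 <= k)%N && (k%:R < Y))%:R) *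
      Ex (@ccc_round_weight R n p) bb
        (fun s => ((foldl (@ccc_step n) set0 (take k s) == [set: 'I_n])%:R))) <= eps / 2.
  apply: (@le_trans _ _ (\sum_(k < bb.+1) ((((1 <= k)%N && (k%:R < Y))%:R) * (rho * Kc)))).
    apply: ler_sum => k _; apply: ler_wpM2l; first exact: ler0n.
    by apply: take_full_bound => //; rewrite -ltnS.
  rewrite -mulr_suml.
  apply: (@le_trans _ _ (Y * (rho * Kc))).
    apply: ler_wpM2r; first by apply: mulr_ge0; apply: ltW.
    apply: (count_le p hn); exact: expR_ge0.
  have -> : Y * (rho * Kc) = Kc / Z.
    rewrite /Y expRD expRN eZ.
    have -> : expR c * Z^-1 * (rho * Kc) = (expR c * rho) * (Kc / Z) by ring.
    by rewrite crho mul1r.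
  rewrite ler_pdivrMr // .
  have : 2 * Kc / eps <= Z by rewrite /Z; lra.
  rewrite ler_pdivrMr // => H2.
  lra.
have B3 : (1 - hh) ^+ K <= eps / 2.
  have bern := bernoulli K h0 hle.
  have bb1 : expR (c + M) < bb%:R + 1.
    by rewrite natr1; apply: truncnS_gt.
  have ecm : expR (c + M) * rho = Z by rewrite expRD eZ mulrAC crho mul1r.
  have A1 : Z < (bb%:R + 1) * rho by rewrite -ecm ltr_pM2r.
  have A2 : (bb%:R + 1 : R) <= K%:R * (n + n)%:R + (n + n)%:R.
    by rewrite -natrM -natrD natr1 ler_nat Ebb -addnS mulnC leq_add2l.
  have A3 : Z < K%:R * (n + n)%:R * rho + (n + n)%:R * rho.
    rewrite -mulrDl; apply: lt_le_trans A1 _; apply: ler_wpM2r => //; exact: ltW.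
  have A4 : (n + n)%:R * rho <= 2.
    by rewrite natrD mulrDl; lra.
  have K0 : (0 : R) <= K%:R by apply: ler0n.
  have A5 : K%:R * (n%:R * p * rho) <= K%:R * hh by apply: ler_wpM2l.
  have A6 : K%:R * (n%:R * p * rho) = (p / 2) * (K%:R * (n + n)%:R * rho).
    by rewrite natrD; field.
  have A7 : (p / 2) * (Z - 2) <= K%:R * hh.
    rewrite A6 in A5; apply: le_trans _ A5; apply: ler_wpM2l; first by apply: divr_ge0 => //; apply: ltW.
    lra.
  have A8 : 2 / eps <= (p / 2) * (Z - 2).
    have : 2 / eps = (p / 2) * (4 / (p * eps)).
      have pz : p != 0 by rewrite gt_eqF.
      have ez : eps != 0 by rewrite gt_eqF.
      by field; rewrite pz ez.
    move=> ->; apply: ler_wpM2l; first by apply: divr_ge0 => //; apply: ltW.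
    lra.
  set P := (1 - hh) ^+ K in bern *.
  have P0 : 0 <= P by apply: exprn_ge0; lra.
  have T2 : 2 / eps <= 1 + K%:R * hh by lra.
  have : P * (2 / eps) <= 1.
    apply: le_trans bern; apply: ler_wpM2l => //.
  have ez : eps != 0 by rewrite gt_eqF.
  have -> : P * (2 / eps) = (P * 2) / eps by rewrite mulrA.
  rewrite ler_pdivrMr // mul1r => H3.
  lra.
lra.
Qed.
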